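(* Let $L$ be an extension of $\mathbb{Z}_\mathrm{max}$ with $\mathrm{ui}(L/\mathbb{Z}_\mathrm{max})<\infty$. Then $L\cong F^{(n)}$ as extensions of $\mathbb{Z}_\mathrm{max}$ for some positive integer $n$.
   Context: A semifield is a commutative semiring (both operations commutative monoids, distributive law) in which every nonzero element is a unit. $\mathbb{Z}_\mathrm{max}=\mathbb{Z}\cup\{-\infty\}$ is the semifield with addition $\max$ and multiplication ordinary addition; writing $u$ for the integer $1$ in it, $\mathbb{Z}_\mathrm{max}=\{0\}\cup\{u^k:k\in\mathbb{Z}\}$. An extension of a semifield $K$ is a semifield $L$ with an injective homomorphism $K\to L$. The unit index is $\mathrm{ui}(L/K)=|L^\times/K^\times|$. For a positive integer $n$, $F^{(n)}$ is the extension of $\mathbb{Z}_\mathrm{max}$ given by $\mathbb{Z}_\mathrm{max}$ itself with embedding $u^k\mapsto u^{nk}$, $0\mapsto 0$. An isomorphism of extensions is a semiring isomorphism compatible with the embeddings. *)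

(* Defs.v *)
From Stdlib Require Import ZArith List.
Open Scope Z_scope.

Record srStruct := SrStruct {
  car :> Type;
  sadd : car -> car -> car;
  smul : car -> car -> car;
  szero : car;
  sone : car }.

Arguments sadd {s} _ _.
Arguments smul {s} _ _.
Arguments szero {s}.
Arguments sone {s}.

Definition is_unit (S : srStruct) (x : S) : Prop := exists y : S, smul x y = sone.

Definition is_semifield (S : srStruct) : Prop :=
  (forall x y z : S, sadd x (sadd y z) = sadd (sadd x y) z) /\
  (forall x y : S, sadd x y = sadd y x) /\
  (forall x : S, sadd szero x = x) /\
  (forall x y z : S, smul x (smul y z) = smul (smul x y) z) /\
  (forall x y : S, smul x y = smul y x) /\
  (forall x : S, smul sone x = x) /\
  (forall x y z : S, smul x (sadd y z) = sadd (smul x y) (smul x z)) /\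
  (forall x : S, smul szero x = szero) /\
  (forall x : S, x <> szero -> is_unit S x).

Definition is_hom (S T : srStruct) (f : S -> T) : Prop :=
  f szero = szero /\ f sone = sone /\
  (forall x y, f (sadd x y) = sadd (f x) (f y)) /\
  (forall x y, f (smul x y) = smul (f x) (f y)).

(* Z_max = Z ∪ {-oo}; None is -oo (the zero), Some k is u^k. *)
Definition zmax_add (a b : option Z) : option Z :=
  match a, b with
  | None, _ => b
  | _, None => a
  | Some x, Some y => Some (Z.max x y)
  end.

Definition zmax_mul (a b : option Z) : option Z :=
  match a, b with
  | Some x, Some y => Some (x + y)
  | _, _ => None
  end.

Definition Zmax : srStruct := SrStruct (option Z) zmax_add zmax_mul None (Some 0).

Definition is_extension (L : srStruct) (f : Zmax -> L) : Prop :=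
  is_semifield L /\ is_hom Zmax L f /\ (forall a b, f a = f b -> a = b).

(* ui(L/K) < oo : the quotient group L^x / f(K^x) is finite, i.e. finitely many
   units represent every coset x f(K^x). *)
Definition finite_unit_index (K L : srStruct) (f : K -> L) : Prop :=
  exists reps : list L,
    (forall r, In r reps -> is_unit L r) /\
    (forall x : L, is_unit L x ->
       exists r k, In r reps /\ is_unit K k /\ x = smul r (f k)).

(* F^(n): Z_max with embedding u^k |-> u^(n k), 0 |-> 0. *)
Definition Fn_emb (n : Z) (a : Zmax) : Zmax :=
  match a with
  | None => None
  | Some k => Some (n * k)
  end.

Definition ext_iso (K L L' : srStruct) (f : K -> L) (g : K -> L') (phi : L -> L') : Prop :=
  is_hom L L' phi /\
  (exists psi : L' -> L, (forall x, psi (phi x) = x) /\ (forall y, phi (psi y) = y)) /\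
  (forall a, phi (f a) = g a).

(* Main.v *)
Require Import Defs.
From Stdlib Require Import ZArith List Lia Arith Classical ClassicalEpsilon.
Open Scope Z_scope.

Local Notation "x ⊕ y" := (sadd x y) (at level 50, left associativity).
Local Notation "x ⊗ y" := (smul x y) (at level 40, left associativity).

Ltac sf HL := let Aa := fresh "Aa" in let Ac := fresh "Ac" in let A0 := fresh "A0" in
  let Ma := fresh "Ma" in let Mc := fresh "Mc" in let M1 := fresh "M1" in
  let Dl := fresh "Dl" in let M0 := fresh "M0" in let Inv := fresh "Inv" in
  destruct HL as (Aa & Ac & A0 & Ma & Mc & M1 & Dl & M0 & Inv).


Lemma add0r (L : srStruct) (HL : is_semifield L) (x : L) : x ⊕ szero = x.
Proof. sf HL. rewrite Ac; apply A0. Qed.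

Lemma mulr1 (L : srStruct) (HL : is_semifield L) (x : L) : x ⊗ sone = x.
Proof. sf HL. rewrite Mc; apply M1. Qed.

Lemma mulr0 (L : srStruct) (HL : is_semifield L) (x : L) : x ⊗ szero = szero.
Proof. sf HL. rewrite Mc; apply M0. Qed.

Lemma Dr (L : srStruct) (HL : is_semifield L) (x y z : L) : (y ⊕ z) ⊗ x = y ⊗ x ⊕ z ⊗ x.
Proof. sf HL. rewrite Mc, Dl, (Mc x y), (Mc x z). reflexivity. Qed.

Lemma zsf (L : srStruct) (HL : is_semifield L) (Hid : forall x : L, x ⊕ x = x) (x y : L) :
  x ⊕ y = szero -> x = szero.
Proof. intro H. pose proof HL as HL'. sf HL'.
  assert (x ⊕ (x ⊕ y) = x) by (rewrite H; apply (add0r _ HL)).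
  rewrite Aa, Hid, H in H0. auto. Qed.

Lemma inv_nz (L : srStruct) (HL : is_semifield L) (H01 : sone <> szero :> L) (x : L) :
  x <> szero -> exists y, x ⊗ y = sone /\ y <> szero.
Proof. intro H. pose proof HL as HL'. sf HL'. destruct (Inv x H) as [y Hy].
  exists y; split; auto. intro; subst. rewrite (mulr0 _ HL) in Hy. auto. Qed.

Lemma nzd (L : srStruct) (HL : is_semifield L) (H01 : sone <> szero :> L) (x y : L) :
  x <> szero -> y <> szero -> x ⊗ y <> szero.
Proof. intros Hx Hy Hxy. pose proof HL as HL'. sf HL'.
  destruct (inv_nz _ HL H01 x Hx) as [xi [Hxi _]].
  apply Hy. rewrite <- (M1 y), <- Hxi, (Mc x xi), <- Ma, Hxy. apply mulr0; auto. Qed.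

Lemma cancel (L : srStruct) (HL : is_semifield L) (H01 : sone <> szero :> L) (a b c : L) :
  c <> szero -> a ⊗ c = b ⊗ c -> a = b.
Proof. intros Hc H. pose proof HL as HL'. sf HL'.
  destruct (inv_nz _ HL H01 c Hc) as [ci [Hci _]].
  rewrite <- (mulr1 _ HL a), <- (mulr1 _ HL b), <- Hci, !Ma, H. reflexivity. Qed.

Fixpoint pw (L : srStruct) (x : L) (n : nat) : L :=
  match n with O => sone | S n => x ⊗ pw L x n end.
Arguments pw {L} _ _.

Lemma pw_add (L : srStruct) (HL : is_semifield L) (x : L) a b : pw x (a + b) = pw x a ⊗ pw x b.
Proof. pose proof HL as HL'. sf HL'. induction a; simpl. - rewrite M1; auto.
  - rewrite IHa, Ma; auto. Qed.

Lemma pw_mulD (L : srStruct) (HL : is_semifield L) (x : L) n m : pw x (n * m) = pw (pw x n) m.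
Proof. pose proof HL as HL'. sf HL'. induction m; simpl.
  - rewrite Nat.mul_0_r; auto.
  - rewrite Nat.mul_succ_r, (pw_add _ HL), IHm, Mc. auto. Qed.

Lemma pw_mulr (L : srStruct) (HL : is_semifield L) (x y : L) n : pw (x ⊗ y) n = pw x n ⊗ pw y n.
Proof. pose proof HL as HL'. sf HL'. induction n; simpl.
  - rewrite M1; auto.
  - rewrite IHn. rewrite <- !Ma. f_equal. rewrite !Ma. f_equal. apply Mc. Qed.

Lemma pw_nz (L : srStruct) (HL : is_semifield L) (H01 : sone <> szero :> L) (x : L) n :
  x <> szero -> pw x n <> szero.
Proof. intro H. induction n; simpl; auto. apply nzd; auto. Qed.

Lemma pw_one (L : srStruct) (HL : is_semifield L) n : pw (sone : L) n = sone.
Proof. pose proof HL as HL'. sf HL'. induction n; simpl; auto. rewrite IHn; auto. Qed.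

Fixpoint G (L : srStruct) (z : L) (n : nat) : L :=
  match n with O => sone | S n => G L z n ⊕ pw z (S n) end.
Arguments G {L} _ _.

Lemma key (L : srStruct) (HL : is_semifield L) (H01 : sone <> szero :> L)
  (Hid : forall x : L, x ⊕ x = x) (z : L) m :
  pw z (S m) ⊕ sone = sone -> z ⊕ sone = sone.
Proof. intro Hz. pose proof HL as HL'. sf HL'.
  assert (L1 : forall n, sone ⊕ G z n = G z n).
  { induction n; simpl. apply Hid. rewrite Aa, IHn; auto. }
  assert (L2 : forall n, z ⊗ G z n ⊕ sone = G z (S n)).
  { induction n; simpl. - rewrite Ac; auto.
    - simpl in IHn. rewrite Dl. change (G z (S (S n))) with (G z (S n) ⊕ pw z (S (S n))). rewrite <- IHn. rewrite <- !Aa, (Ac (z ⊗ (z ⊗ pw z n))). auto. }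
  assert (L3 : forall n, G z n ⊕ G z (S n) = G z (S n)).
  { intro n; simpl. rewrite Aa, Hid; auto. }
  assert (L4 : forall n, pw (sone ⊕ z) n = G z n).
  { induction n; [reflexivity|]. change (pw (sone ⊕ z) (S n)) with ((sone ⊕ z) ⊗ pw (sone ⊕ z) n).
    rewrite IHn, (Dr _ HL), M1.
    rewrite <- L2. rewrite <- (L1 n) at 1. rewrite (Ac sone), <- Aa, (Ac sone), L2. apply L3. }
  assert (E : pw (sone ⊕ z) (S m) = pw (sone ⊕ z) m).
  { rewrite !L4. change (G z (S m)) with (G z m ⊕ pw z (S m)). rewrite <- (L1 m) at 1. rewrite (Ac sone), <- Aa, (Ac sone), Hz.
    rewrite Ac; apply L1. }
  simpl in E. rewrite <- (M1 (pw (sone ⊕ z) m)) in E at 2.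
  apply cancel in E; auto.
  - rewrite Ac; auto.
  - apply pw_nz; auto. intro Hs. apply zsf in Hs; auto. Qed.

Lemma f_max (L : srStruct) (f : Zmax -> L) (Hf : is_hom Zmax L f) a b :
  f (Some a) ⊕ f (Some b) = f (Some (Z.max a b)).
Proof. destruct Hf as (_ & _ & Fa & _). rewrite <- Fa. reflexivity. Qed.

Lemma f_mul (L : srStruct) (f : Zmax -> L) (Hf : is_hom Zmax L f) a b :
  f (Some a) ⊗ f (Some b) = f (Some (a + b)).
Proof. destruct Hf as (_ & _ & _ & Fm). rewrite <- Fm. reflexivity. Qed.

Lemma f_one (L : srStruct) (f : Zmax -> L) (Hf : is_hom Zmax L f) : f (Some 0) = sone.
Proof. destruct Hf as (_ & F1 & _). exact F1. Qed.

Lemma pw_f (L : srStruct) (f : Zmax -> L) (Hf : is_hom Zmax L f) a n :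
  pw (f (Some a)) n = f (Some (Z.of_nat n * a)).
Proof. induction n; simpl pw.
  - rewrite <- (f_one _ _ Hf). reflexivity.
  - rewrite IHn, (f_mul _ _ Hf). f_equal. f_equal. lia. Qed.

Lemma compare (L : srStruct) (HL : is_semifield L) (H01 : sone <> szero :> L)
  (Hid : forall x : L, x ⊕ x = x) (f : Zmax -> L) (Hf : is_hom Zmax L f) (D : nat)
  (x y : L) a b : (0 < D)%nat -> y <> szero ->
  pw x D = f (Some a) -> pw y D = f (Some b) -> a <= b -> x ⊕ y = y.
Proof. intros HD Hy Hx Hy' Hab. pose proof HL as HL'. sf HL'.
  destruct (inv_nz _ HL H01 y Hy) as [yi [Hyi _]].
  assert (E : pw (x ⊗ yi) D ⊕ sone = sone).
  { apply (cancel _ HL H01 _ _ (pw y D)). apply pw_nz; auto.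
    rewrite (Dr _ HL), M1, <- (pw_mulr _ HL), <- Ma, (Mc yi y), Hyi, (mulr1 _ HL), Hx, Hy', (f_max _ _ Hf).
    f_equal. f_equal. lia. }
  destruct D as [|m]; [lia|]. apply key in E; auto.
  assert (E2 : (x ⊗ yi ⊕ sone) ⊗ y = sone ⊗ y) by (rewrite E; auto).
  rewrite (Dr _ HL), <- Ma, (Mc yi y), Hyi, (mulr1 _ HL), M1 in E2. auto. Qed.

Lemma pigeon (L : Type) (reps : list L) (h : nat -> L) :
  (forall i, In (h i) reps) -> exists i j, (i < j)%nat /\ h i = h j.
Proof. intro Hh. apply NNPP. intro H.
  assert (ND : NoDup (map h (seq 0 (S (length reps))))).
  { apply NoDup_map_NoDup_ForallPairs; [|apply seq_NoDup].
    intros a b _ _ E. destruct (lt_eq_lt_dec a b) as [[Hl|Hl]|Hl]; auto.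
    - exfalso; apply H; eauto.
    - exfalso; apply H; eauto. }
  apply NoDup_incl_length with (l' := reps) in ND.
  - rewrite length_map, length_seq in ND. lia.
  - intros x Hx. apply in_map_iff in Hx. destruct Hx as [i [<- _]]. auto. Qed.

Lemma minpos (P : Z -> Prop) c : 0 < c -> P c ->
  exists g, 0 < g /\ P g /\ forall c', 0 < c' < g -> ~ P c'.
Proof.
  assert (forall n c, Z.to_nat c = n -> 0 < c -> P c ->
    exists g, 0 < g /\ P g /\ forall c', 0 < c' < g -> ~ P c').
  { intro n. induction n as [n IH] using lt_wf_ind. intros c0 Hn Hc HP.
    destruct (classic (exists c', 0 < c' < c0 /\ P c')) as [[c' [Hc' HP']]|Hno].
    - apply (IH (Z.to_nat c')) with c'; auto; lia.
    - exists c0. split; auto. split; auto. intros c' Hc' HP'. apply Hno; eauto. }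
  eauto. Qed.

Lemma exp_one (L : srStruct) (HL : is_semifield L) (H01 : sone <> szero :> L)
  (f : Zmax -> L) (Hf : is_hom Zmax L f) (reps : list L)
  (Hcov : forall x : L, x <> szero -> exists r k, In r reps /\ x = r ⊗ f (Some k))
  (a : L) : a <> szero -> exists m c, (0 < m)%nat /\ pw a m = f (Some c).
Proof. intro Ha. pose proof HL as HL'. sf HL'.
  assert (Hx : forall i, exists r, In r reps /\ exists k, pw a i = r ⊗ f (Some k)).
  { intro i. destruct (Hcov (pw a i)) as [r [k [Hr E]]]. apply pw_nz; auto. eauto. }
  set (h := fun i => proj1_sig (constructive_indefinite_description _ (Hx i))).
  assert (Hh : forall i, In (h i) reps /\ exists k, pw a i = h i ⊗ f (Some k)).
  { intro i. exact (proj2_sig (constructive_indefinite_description _ (Hx i))). }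
  destruct (pigeon _ reps h (fun i => proj1 (Hh i))) as [i [j [Hij Ehij]]].
  destruct (proj2 (Hh i)) as [k1 E1]. destruct (proj2 (Hh j)) as [k2 E2].
  exists (j - i)%nat, (k2 - k1). split; [lia|].
  apply (cancel _ HL H01 _ _ (pw a i)). apply pw_nz; auto.
  rewrite Mc, <- (pw_add _ HL). replace (i + (j - i))%nat with j by lia.
  rewrite E2, E1, <- Ehij, Ma, (Mc _ (h i)), <- Ma, (f_mul _ _ Hf). f_equal. f_equal. f_equal. lia. Qed.

Theorem mainTheorem4 (L : srStruct) (f : Zmax -> L) :
  is_extension L f ->
  finite_unit_index Zmax L f ->
  exists n : Z, 0 < n /\ exists phi : L -> Zmax, ext_iso Zmax L Zmax f (Fn_emb n) phi.
Proof.
  intros [HL [Hf Hinj]] [reps [Hr Hcov]].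
  pose proof HL as HL'. sf HL'.
  assert (F0 : f None = szero) by (destruct Hf as (F0 & _); exact F0).
  assert (H01 : sone <> szero :> L).
  { intro E. assert (E2 : f (Some 0) = f None) by (rewrite (f_one _ _ Hf), F0; auto).
    apply Hinj in E2; discriminate. }
  assert (Hid : forall x : L, x ⊕ x = x).
  { assert (E : sone ⊕ sone = sone :> L) by (rewrite <- (f_one _ _ Hf), (f_max _ _ Hf); reflexivity).
    intro x. rewrite <- (mulr1 _ HL x), <- Dl, E. auto. }
  assert (fnz : forall k, f (Some k) <> szero).
  { intros k E. rewrite <- F0 in E. apply Hinj in E; discriminate. }
  assert (cov : forall x : L, x <> szero -> exists r k, In r reps /\ x = r ⊗ f (Some k)).
  { intros x Hx. destruct (Hcov x (Inv x Hx)) as [r [k [Hin [[y Hk] E]]]].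
    destruct k as [k|]; [|discriminate]. eauto. }
  assert (rnz : forall r, In r reps -> r <> szero).
  { intros r Hin E. destruct (Hr r Hin) as [y Hy]. rewrite E, M0 in Hy. auto. }
  assert (Unif : forall l : list L, (forall r, In r l -> r <> szero) ->
     exists D, (0 < D)%nat /\ forall r, In r l -> exists c, pw r D = f (Some c)).
  { induction l as [|a l IH]; intro Hl.
    - exists 1%nat. split; [lia|]. intros r [].
    - destruct IH as [D [HD HDr]]. { intros; apply Hl; simpl; auto. }
      destruct (exp_one _ HL H01 f Hf reps cov a) as [m [c [Hm Hc]]]. apply Hl; simpl; auto.
      exists (D * m)%nat. split; [lia|]. intros r [<-|Hin].
      + rewrite Nat.mul_comm, (pw_mulD _ HL), Hc, (pw_f _ _ Hf). eauto.
      + destruct (HDr r Hin) as [c' Hc']. rewrite (pw_mulD _ HL), Hc', (pw_f _ _ Hf). eauto. }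
  destruct (Unif reps rnz) as [D [HD HDr]].
  assert (HDall : forall x, x <> szero -> exists c, pw x D = f (Some c)).
  { intros x Hx. destruct (cov x Hx) as [r [k [Hin ->]]]. destruct (HDr r Hin) as [c Hc].
    rewrite (pw_mulr _ HL), Hc, (pw_f _ _ Hf), (f_mul _ _ Hf). eauto. }
  assert (funi : forall c c', f (Some c) = f (Some c') -> c = c').
  { intros c c' E. apply Hinj in E. injection E; auto. }
  set (Img := fun c => exists x, x <> szero /\ pw x D = f (Some c)).
  assert (ISub : forall a b, Img a -> Img b -> Img (a - b)).
  { intros a b [x [Hx Ex]] [y [Hy Ey]].
    destruct (inv_nz _ HL H01 y Hy) as [yi [Hyi Hyi0]].
    exists (x ⊗ yi). split. apply nzd; auto.
    apply (cancel _ HL H01 _ _ (pw y D)). apply pw_nz; auto.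
    rewrite <- (pw_mulr _ HL), <- Ma, (Mc yi y), Hyi, (mulr1 _ HL), Ex, Ey, (f_mul _ _ Hf).
    f_equal; f_equal; lia. }
  assert (I0 : Img 0).
  { exists sone. split; auto. rewrite (pw_one _ HL), (f_one _ _ Hf). auto. }
  assert (ID : Img (Z.of_nat D)).
  { exists (f (Some 1)). split; auto. rewrite (pw_f _ _ Hf). f_equal; f_equal; lia. }
  assert (IN : forall a, Img a -> Img (- a)).
  { intros a Ha. replace (-a) with (0 - a) by lia. auto. }
  assert (IA : forall a b, Img a -> Img b -> Img (a + b)).
  { intros a b Ha Hb. replace (a + b) with (a - - b) by lia. auto. }
  destruct (minpos Img (Z.of_nat D)) as [g [Hg [Ig Gmin]]]; auto. lia.
  assert (Imul : forall q, Img (g * q)).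
  { assert (forall k : nat, Img (g * Z.of_nat k)).
    { induction k. replace (g * Z.of_nat 0) with 0 by lia; auto.
      replace (g * Z.of_nat (S k)) with (g * Z.of_nat k + g) by lia. auto. }
    intro q. destruct (Z_le_gt_dec 0 q).
    - replace q with (Z.of_nat (Z.to_nat q)) by lia. auto.
    - replace (g * q) with (- (g * Z.of_nat (Z.to_nat (- q)))) by lia. auto. }
  assert (Idiv : forall c, Img c -> c = g * (c / g)).
  { intros c Hc. pose proof (Z.div_mod c g ltac:(lia)) as Em.
    pose proof (Z.mod_pos_bound c g Hg) as Bm.
    assert (Im : Img (c mod g)).
    { replace (c mod g) with (c - g * (c / g)) by lia. auto. }
    destruct (Z.eq_dec (c mod g) 0) as [E0|Ne]. lia.
    exfalso. apply (Gmin (c mod g)); auto. lia. }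
  set (n := Z.of_nat D / g).
  assert (Dn : Z.of_nat D = g * n) by (apply Idiv; auto).
  exists n. split. { nia. }
  set (R := fun (x : L) (y : Zmax) => (x = szero /\ y = None) \/
       (x <> szero /\ exists c, pw x D = f (Some (g * c)) /\ y = Some c)).
  assert (Hex : forall x, exists y, R x y).
  { intro x. destruct (classic (x = szero)) as [Hx|Hx].
    - exists None. left; auto.
    - destruct (HDall x Hx) as [c Hc]. exists (Some (c / g)). right. split; auto.
      exists (c / g). split; auto. rewrite <- Idiv; auto. exists x; auto. }
  set (phi := fun x => proj1_sig (constructive_indefinite_description _ (Hex x))).
  assert (Hphi : forall x, R x (phi x)).
  { intro x. exact (proj2_sig (constructive_indefinite_description _ (Hex x))). }
  assert (phi0 : phi szero = None).
  { destruct (Hphi szero) as [[_ E]|[C _]]; auto. congruence. }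
  assert (phiS : forall x c, x <> szero -> pw x D = f (Some (g * c)) -> phi x = Some c).
  { intros x c Hx E. destruct (Hphi x) as [[C _]|[_ [c' [E' ->]]]]. congruence.
    rewrite E in E'. apply funi in E'. f_equal. nia. }
  assert (phiinv : forall x, x <> szero -> exists c, pw x D = f (Some (g * c)) /\ phi x = Some c).
  { intros x Hx. destruct (Hphi x) as [[C _]|[_ H]]. congruence. auto. }
  exists phi. split; [|split].
  - split; [exact phi0|split; [|split]].
    + apply phiS; auto. rewrite (pw_one _ HL), Z.mul_0_r, (f_one _ _ Hf). auto.
    + intros x y. change (phi (x ⊕ y) = zmax_add (phi x) (phi y)).
      destruct (classic (x = szero)) as [->|Hx]. { rewrite A0, phi0. reflexivity. }
      destruct (classic (y = szero)) as [->|Hy]. { rewrite (add0r _ HL), phi0. destruct (phi x); reflexivity. }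
      destruct (phiinv x Hx) as [a [Ea Pa]]. destruct (phiinv y Hy) as [b [Eb Pb]].
      rewrite Pa, Pb. simpl. destruct (Z_le_gt_dec a b).
      * rewrite (compare _ HL H01 Hid f Hf D x y (g * a) (g * b)); auto; [|nia].
        rewrite Pb, Z.max_r; auto.
      * rewrite Ac, (compare _ HL H01 Hid f Hf D y x (g * b) (g * a)); auto; [|nia].
        rewrite Pa, Z.max_l; auto; lia.
    + intros x y. change (phi (x ⊗ y) = zmax_mul (phi x) (phi y)).
      destruct (classic (x = szero)) as [->|Hx]. { rewrite M0, phi0. reflexivity. }
      destruct (classic (y = szero)) as [->|Hy]. { rewrite (mulr0 _ HL), phi0. destruct (phi x); reflexivity. }
      destruct (phiinv x Hx) as [a [Ea Pa]]. destruct (phiinv y Hy) as [b [Eb Pb]].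
      rewrite Pa, Pb. simpl. apply phiS. apply nzd; auto.
      rewrite (pw_mulr _ HL), Ea, Eb, (f_mul _ _ Hf). f_equal; f_equal; lia.
  - assert (Hsurj : forall y, exists x, phi x = y).
    { intros [c|]. + destruct (Imul c) as [x [Hx Ex]]. exists x. apply phiS; auto.
      + exists szero. auto. }
    assert (Hinjp : forall x x', phi x = phi x' -> x = x').
    { intros x x' E. destruct (classic (x = szero)) as [Hx|Hx];
      destruct (classic (x' = szero)) as [Hx'|Hx'].
      - rewrite Hx, Hx'; reflexivity.
      - subst x. rewrite phi0 in E. destruct (phiinv x' Hx') as [c [_ P]]. rewrite P in E; discriminate.
      - subst x'. rewrite phi0 in E. destruct (phiinv x Hx) as [c [_ P]]. rewrite P in E; discriminate.
      - destruct (phiinv x Hx) as [a [Ea Pa]]. destruct (phiinv x' Hx') as [b [Eb Pb]].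
        rewrite Pa, Pb in E. injection E as <-.
        rewrite <- (compare _ HL H01 Hid f Hf D x' x (g * a) (g * a)); auto; [|lia].
        rewrite Ac. apply (compare _ HL H01 Hid f Hf D x x' (g * a) (g * a)); auto; lia. }
    set (psi := fun y => proj1_sig (constructive_indefinite_description _ (Hsurj y))).
    assert (Hpsi : forall y, phi (psi y) = y).
    { intro y. exact (proj2_sig (constructive_indefinite_description _ (Hsurj y))). }
    exists psi. split; auto.
  - intros [k|].
    + simpl. apply phiS; auto. rewrite (pw_f _ _ Hf). f_equal; f_equal. nia.
    + simpl. rewrite F0. auto.
Qed.
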